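(* Let $X$ be a $T_1$ space and $\mathcal{P}$ an ideal of closed subsets of $X$. If the ring $C(X)_\mathcal{P}$ is isomorphic to the ring $C(Y)$ of all real-valued continuous functions on some topological space $Y$, then $C(X)_\mathcal{P}$ is closed under uniform limits, i.e. whenever a sequence $(f_n)$ in $C(X)_\mathcal{P}$ converges uniformly on $X$ to $f\in\mathbb{R}^X$, we have $f\in C(X)_\mathcal{P}$.
   Context: An ideal of closed subsets of $X$ is a family $\mathcal{P}$ of closed subsets of $X$ closed under finite unions and such that every closed subset of a member of $\mathcal{P}$ is in $\mathcal{P}$. For $f\in\mathbb{R}^X$, $D_f$ is the set of points of discontinuity of $f$, and $C(X)_\mathcal{P}=\{f\in\mathbb{R}^X\colon \overline{D_f}\in\mathcal{P}\}$ with pointwise operations. *)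

(* Defs.v *)
From HB Require Import structures.
From mathcomp Require Import all_boot all_order all_algebra.
From mathcomp Require Import all_classical all_reals all_analysis.
Set Implicit Arguments. Unset Strict Implicit. Unset Printing Implicit Defensive.
Import Order.TTheory GRing.Theory Num.Theory.
Import numFieldNormedType.Exports.
Local Open Scope classical_set_scope.
Local Open Scope ring_scope.

Definition closed_ideal (X : topologicalType) (P : set (set X)) : Prop :=
  [/\ forall A, P A -> closed A,
      P set0,
      forall A B, P A -> P B -> P (A `|` B) &
      forall A B, P A -> closed B -> B `<=` A -> P B].

Definition discont (X : topologicalType) (R : realType) (f : X -> R) : set X :=
  [set x | ~ {for x, continuous f}].

Definition CP (X : topologicalType) (R : realType) (P : set (set X)) :
  set (X -> R) := [set f | P (closure (discont f))].
Arguments CP {X} R P.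

Definition CP_ring_iso_CY (X : topologicalType) (R : realType)
  (P : set (set X)) (Y : topologicalType) : Prop :=
  exists phi : (X -> R) -> (Y -> R),
    [/\ forall f, CP R P f -> continuous (phi f),
        forall f g, CP R P f -> CP R P g -> phi (f \+ g) = phi f \+ phi g,
        forall f g, CP R P f -> CP R P g -> phi (f \* g) = phi f \* phi g,
        forall f g, CP R P f -> CP R P g -> phi f = phi g -> f = g &
        forall h : Y -> R, continuous h -> exists2 f, CP R P f & phi f = h].

Definition unif_conv (X : Type) (R : realType) (fn : nat -> X -> R) (f : X -> R)
  : Prop :=
  forall e : R, 0 < e -> exists N : nat, forall n : nat, (N <= n)%N ->
    forall x : X, `|fn n x - f x| < e.
Arguments CP_ring_iso_CY {X} R P Y.

(* Main.v *)
Require Import Defs.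
From HB Require Import structures.
From mathcomp Require Import all_boot all_order all_algebra.
From mathcomp Require Import all_classical all_reals all_analysis.
From mathcomp Require Import lra.
Import Order.TTheory GRing.Theory Num.Theory.
Import numFieldNormedType.Exports.
Local Open Scope classical_set_scope.
Local Open Scope ring_scope.

Lemma CP_sub {R : realType} {X : topologicalType} {P : set (set X)}
  {f1 f2 g : X -> R} : closed_ideal P -> CP R P f1 -> CP R P f2 ->
  discont g `<=` discont f1 `|` discont f2 -> CP R P g.
Proof.
case=> _ _ PU Psub H1 H2 sub.
apply: (Psub _ _ (PU _ _ H1 H2)); first exact: closed_closure.
by rewrite -closureU; apply: closureS.
Qed.

Lemma CP_cst {R : realType} {X : topologicalType} {P : set (set X)} (c : R) :
  closed_ideal P -> CP R P (fun=> c).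
Proof.
case=> _ P0 _ Psub; apply: (Psub _ _ P0); first exact: closed_closure.
have -> : discont (fun _ : X => c) = set0.
  apply: funext => x; apply: propext; split => // -[]; exact: cst_continuous.
by rewrite closure0.
Qed.

Lemma CP_add {R : realType} {X : topologicalType} {P : set (set X)}
  {f g : X -> R} : closed_ideal P -> CP R P f -> CP R P g ->
  CP R P (fun x => f x + g x).
Proof.
move=> Pid Hf Hg; apply: (CP_sub Pid Hf Hg) => x dx.
apply/not_andP => -[c1 c2]; apply: dx; exact: continuousD c1 c2.
Qed.

Lemma CP_mul {R : realType} {X : topologicalType} {P : set (set X)}
  {f g : X -> R} : closed_ideal P -> CP R P f -> CP R P g ->
  CP R P (fun x => f x * g x).
Proof.
move=> Pid Hf Hg; apply: (CP_sub Pid Hf Hg) => x dx.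
apply/not_andP => -[c1 c2]; apply: dx; exact: continuousM c1 c2.
Qed.

Lemma CP_opp {R : realType} {X : topologicalType} {P : set (set X)}
  {f : X -> R} : closed_ideal P -> CP R P f ->
  CP R P (fun x => - f x).
Proof.
move=> Pid Hf; apply: (CP_sub Pid Hf Hf) => x dx; left.
move=> c1; apply: dx; exact: continuousN c1.
Qed.

Lemma CP_sqrt {R : realType} {X : topologicalType} {P : set (set X)}
  {f : X -> R} : closed_ideal P -> CP R P f ->
  CP R P (fun x => Num.sqrt (f x)).
Proof.
move=> Pid Hf; apply: (CP_sub Pid Hf Hf) => x dx; left.
move=> c1; apply: dx; apply: (continuous_comp c1); exact: sqrt_continuous.
Qed.
Lemma small_inv {R : realType} {eps : R} : 0 < eps -> exists k : nat, k.+1%:R^-1 < eps.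
Proof.
move=> e0; exists (Num.truncn eps^-1).
by rewrite -ltf_pV2 ?(posrE,divr_gt0)// invrK truncnS_gt.
Unshelve. all: by end_near. Qed.

Theorem theorem3p3 (R : realType) (X : topologicalType) (P : set (set X)) :
  accessible_space X -> closed_ideal P ->
  (exists Y : topologicalType, CP_ring_iso_CY R P Y) ->
  forall (fn : nat -> X -> R) (f : X -> R),
    (forall n, CP R P (fn n)) -> unif_conv fn f -> CP R P f.
Proof.
move=> _ Pid [Y [ph [phc phD phM phI phS]]] fn f fnP ufn.
have CPc c : CP R P (fun=> c) by exact: CP_cst.
have ph0 y : ph (fun=> 0) y = 0.
  have := phD _ _ (CPc 0) (CPc 0).
  have -> : (fun=> 0 : R) \+ (fun=> 0 : R) = (fun=> 0 : R) :> (X -> R).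
    by apply: funext => x /=; rewrite addr0.
  by move/(congr1 (fun h => h y)) => /= E; lra.
have phN g y : CP R P g -> ph (fun x => - g x) y = - ph g y.
  move=> Hg; have := phD _ _ Hg (CP_opp Pid Hg).
  have -> : g \+ (fun x => - g x) = (fun=> 0 : R).
    by apply: funext => x /=; rewrite subrr.
  by move/(congr1 (fun h => h y)) => /=; rewrite ph0 => E; lra.
have ph1 y : ph (fun=> 1) y = 1.
  have [u Hu phu] : exists2 u, CP R P u & ph u = fun=> 1 by apply: phS; exact: cst_continuous.
  have := phM _ _ (CPc 1) Hu.
  have -> : (fun=> 1 : R) \* u = u by apply: funext => x /=; rewrite mul1r.
  by rewrite phu => /(congr1 (fun h => h y)) /= ; rewrite mulr1.
have phn (n : nat) y : ph (fun=> n%:R) y = n%:R.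
  elim: n => [|n IH]; first exact: ph0.
  have := phD _ _ (CPc n%:R) (CPc 1).
  have -> : (fun=> n%:R : R) \+ (fun=> 1) = (fun=> n.+1%:R) :> (X -> R).
    by apply: funext => x /=; rewrite -natr1.
  by move/(congr1 (fun h => h y)) => /= ->; rewrite IH ph1 natr1.
pose e (k : nat) : R := k.+1%:R^-1.
have e0 k : 0 < e k by rewrite invr_gt0.
have phe k y : ph (fun=> e k) y = e k.
  have := phM _ _ (CPc k.+1%:R) (CPc (e k)).
  have -> : (fun=> k.+1%:R : R) \* (fun=> e k) = (fun=> 1) :> (X -> R).
    by apply: funext => x /=; rewrite mulfV.
  move/(congr1 (fun h => h y)) => /=; rewrite ph1 phn => E.
  have nz : k.+1%:R != 0 :> R by rewrite pnatr_eq0.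
  by rewrite -[LHS](mulKf nz) -E mulr1.
have phB a b y : CP R P a -> CP R P b ->
    ph (fun x => a x - b x) y = ph a y - ph b y.
  move=> Ha Hb; have := phD _ _ Ha (CP_opp Pid Hb).
  move/(congr1 (fun h => h y)) => /= E.
  by rewrite -(phN b y Hb) -E.
have pos g : CP R P g -> (forall x, 0 <= g x) -> forall y, 0 <= ph g y.
  move=> Hg g0 y; pose s := fun x => Num.sqrt (g x).
  have Hs : CP R P s := CP_sqrt Pid Hg.
  have E : g = s \* s.
    by apply: funext => x /=; rewrite -expr2 sqr_sqrtr.
  by rewrite E phM //= -expr2 sqr_ge0.
have rpos g : CP R P g -> (forall y, 0 <= ph g y) -> forall x, 0 <= g x.
  move=> Hg g0 x; pose t := fun y => Num.sqrt (ph g y).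
  have [s Hs phs] : exists2 s, CP R P s & ph s = t.
    apply: phS => y; apply: continuous_comp; [exact: (phc _ Hg y) | exact: sqrt_continuous].
  have E : g = s \* s.
    apply: phI => //; first exact: CP_mul.
    rewrite phM // phs; apply: funext => y /=.
    by rewrite -expr2 sqr_sqrtr.
  by rewrite E /= -expr2 sqr_ge0.
have nrm (a c : R) : (`|a| <= c) <-> (0 <= c - a /\ 0 <= c + a).
  rewrite ler_norml; split => [/andP[? ?]|[? ?]]; first by split; lra.
  by apply/andP; split; lra.
have BND d k : CP R P d ->
    (forall x, `|d x| <= e k) <-> (forall y, `|ph d y| <= e k).
  move=> Hd.
  have HA : CP R P (fun x => e k - d x) := CP_add Pid (CPc _) (CP_opp Pid Hd).
  have HB : CP R P (fun x => e k + d x) := CP_add Pid (CPc _) Hd.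
  have phA y : ph (fun x => e k - d x) y = e k - ph d y.
    by rewrite (phB (fun=> e k) d) // phe.
  have phB' y : ph (fun x => e k + d x) y = e k + ph d y.
    by rewrite (phD (fun=> e k) d) //= phe.
  split => H z; apply/nrm.
  - rewrite -phA -phB'; split; apply: pos => // x; have /nrm[] := H x => //.
  - split.
      by apply: (rpos _ HA _ z) => y; rewrite phA; have /nrm[] := H y.
    by apply: (rpos _ HB _ z) => y; rewrite phB'; have /nrm[] := H y.
have cauchyX k : exists N, forall n m, (N <= n)%N -> (N <= m)%N ->
    forall x, `|fn n x - fn m x| <= e k.
  have e2 : 0 < e k / 2 by rewrite divr_gt0.
  have [N HN] := ufn _ e2.
  exists N => n m Nn Nm x.
  have h1 := HN n Nn x; have h2 := HN m Nm x.
  apply: le_trans (ler_distD (f x) _ _) _; rewrite (distrC (f x)); lra.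
have cauchyY k : exists N, forall n m, (N <= n)%N -> (N <= m)%N ->
    forall y, `|ph (fn n) y - ph (fn m) y| <= e k.
  have [N HN] := cauchyX k; exists N => n m Nn Nm y.
  rewrite -phB //.
  exact: ((BND (fun x => fn n x - fn m x) k (CP_add Pid (fnP n) (CP_opp Pid (fnP m)))).1 (HN n m Nn Nm)).
have cv y : cvg ((fun n => ph (fn n) y) @ \oo).
  apply: cauchy_cvg; apply: cauchy_exP => eps eps0.
  have [k ke] := small_inv eps0; have [N HN] := cauchyY k.
  exists (ph (fn N) y); exists N => // n /= Nn.
  rewrite -ball_normE /ball_ /=.
  exact: le_lt_trans (HN N n (leqnn N) Nn y) ke.
pose h y := lim ((fun n => ph (fn n) y) @ \oo).
have hcv y : (fun n => ph (fn n) y) @ \oo --> h y := cv y.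
have unifY k : exists N, forall n, (N <= n)%N ->
    forall y, `|ph (fn n) y - h y| <= e k.
  have [N HN] := cauchyY k; exists N => n Nn y.
  apply/ler_addgt0Pr => d d0.
  have [M _ HM] := (cvgrPdist_le _ _).1 (hcv y) d d0.
  have hm := HM (maxn N M) (leq_maxr _ _).
  have hn := HN n (maxn N M) Nn (leq_maxl _ _) y.
  apply: le_trans (ler_distD (ph (fn (maxn N M)) y) _ _) _.
  rewrite (distrC _ (h y)) /=; lra.
have hcont : continuous h.
  move=> y; apply/cvgrPdist_lt => eps eps0.
  have eps3 : 0 < eps / 3 by rewrite divr_gt0.
  have [k ke] := small_inv eps3.
  have [N HN] := unifY k.
  have := (cvgrPdist_lt _ _).1 (phc _ (fnP N) y) (e k) (e0 k).
  move=> hy; near=> z; have hz : `|ph (fn N) y - ph (fn N) z| < e k by near: z; exact: hy.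
  have h1 := HN N (leqnn N) y; have h2 := HN N (leqnn N) z.
  apply: le_lt_trans (ler_distD (ph (fn N) y) _ _) _.
  apply: le_lt_trans (lerD (lexx _) (ler_distD (ph (fn N) z) _ _)) _.
  have ke2 : e k < eps / 3 := ke.
  rewrite (distrC (h y)); lra.
have [g Hg phg] := phS h hcont.
have unifX k : exists N, forall n, (N <= n)%N ->
    forall x, `|fn n x - g x| <= e k.
  have [N HN] := unifY k; exists N => n Nn.
  apply: (BND (fun x => fn n x - g x) k (CP_add Pid (fnP n) (CP_opp Pid Hg))).2.
  by move=> y; rewrite phB // phg; exact: HN.
have -> : f = g; last exact: Hg.
apply: funext => x; apply/eqP; rewrite -subr_eq0 -normr_le0.
apply/ler_addgt0Pr => eps eps0; rewrite add0r.
have eps2 : 0 < eps / 2 by rewrite divr_gt0.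
have [k ke] := small_inv eps2.
have [N1 H1] := ufn _ eps2; have [N2 H2] := unifX k.
have h1 := H1 (maxn N1 N2) (leq_maxl _ _) x.
have h2 := H2 (maxn N1 N2) (leq_maxr _ _) x.
apply: le_trans (ler_distD (fn (maxn N1 N2) x) _ _) _.
have ke2 : e k < eps / 2 := ke.
rewrite (distrC (f x)); lra.
Unshelve. all: by end_near. Qed.
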